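(* Let $0 < \varepsilon \leq 1/2$ and $d \geq 1$. Then for every positive integer $N \leq 2^{(1-H(\varepsilon))d}$ there exists an $\varepsilon$-sparse set $S \subseteq I_3^d$ with $|S| = N$.
   Context: $H(x) = -x\log_2 x - (1-x)\log_2(1-x)$ is the binary entropy function. $I_3^d = \{1,2,3\}^d$. For $\alpha,\beta \in I_3^d$, $\rho(\alpha,\beta)$ is the Hamming distance (number of coordinates where they differ). For $\alpha \in I_3^d$ let $T_\alpha = \{\beta \in I_3^d : \rho(\alpha,\beta) = d\}$. For $0<\varepsilon<1$, a set $S \subseteq I_3^d$ is $\varepsilon$-sparse if (1) $\rho(\alpha,\beta) \geq \varepsilon d$ for all distinct $\alpha,\beta \in S$, and (2) for every $\alpha \in S$ there is $\gamma_\alpha \in I_3^d$ with $T_{\gamma_\alpha} \cap S = \{\alpha\}$. *)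

(* Defs.v *)
From mathcomp Require Import all_boot.
From Stdlib Require Import Reals.
Set Implicit Arguments. Unset Strict Implicit. Unset Printing Implicit Defensive.

(* I_3^d : functions 'I_d -> 'I_3 (the symbols 1,2,3 are represented by 0,1,2). *)
Definition cube (d : nat) := {ffun 'I_d -> 'I_3}.

Definition hamming (d : nat) (a b : cube d) : nat := #|[set i : 'I_d | a i != b i]|.

Definition Tset (d : nat) (a : cube d) : {set cube d} := [set b | hamming a b == d].

Definition log2 (x : R) : R := (ln x / ln 2)%R.
Definition Hbin (x : R) : R := (- x * log2 x - (1 - x) * log2 (1 - x))%R.

Definition eps_sparse (eps : R) (d : nat) (S : {set cube d}) : Prop :=
  (forall a b, a \in S -> b \in S -> a <> b -> (eps * INR d <= INR (hamming a b))%R) /\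
  (forall a, a \in S -> exists g : cube d, Tset g :&: S = [set a]).

(* Main.v *)
Require Import Defs.
From mathcomp Require Import all_boot.
From Stdlib Require Import Reals Lra.
From mathcomp Require Import Rstruct.
Set Implicit Arguments. Unset Strict Implicit. Unset Printing Implicit Defensive.

Definition bv d := {ffun 'I_d -> bool}.
Definition hb d (a b : bv d) : nat := #|[set i : 'I_d | a i != b i]|.

Lemma hb_sym d (a b : bv d) : hb a b = hb b a.
Proof. by apply: eq_card => i; rewrite !inE eq_sym. Qed.

Lemma hb_refl d (a : bv d) : hb a a = 0%N.
Proof. by apply/eqP; rewrite cards_eq0; apply/eqP/setP=> i; rewrite !inE eqxx. Qed.

Lemma hb_le d (a b : bv d) : (hb a b <= d)%N.
Proof. by rewrite /hb -[X in (_ <= X)%N]card_ord max_card. Qed.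

Definition wt (e : R) d (a x : bv d) : R :=
  \big[Rmult/1%R]_(i : 'I_d) (if a i == x i then (1 - e)%R else e).

Lemma sum_wt e d (a : bv d) : \big[Rplus/0%R]_(x : bv d) wt e a x = 1%R.
Proof.
rewrite /wt -(bigA_distr_bigA (fun i j => if a i == j then (1 - e)%R else e)).
rewrite big1 // => i _; rewrite big_bool /=.
have h1 : forall x : R, Rplus (Rminus 1 x) x = 1%R by move=> x; ring.
have h2 : forall x : R, Rplus x (Rminus 1 x) = 1%R by move=> x; ring.
by case: (a i) => /=; [exact: h1 | exact: h2].
Qed.

Lemma iter_mul n (c : R) : iter n (Rmult c) 1%R = (c ^ n)%R.
Proof. by elim: n => //= n ->. Qed.

Lemma iter_add n (c : R) : iter n (Rplus c) 0%R = (INR n * c)%R.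
Proof.
elim: n => [|n IH]; first by rewrite /=; ring.
change (iter n.+1 (Rplus c) 0%R) with (c + iter n (Rplus c) 0%R)%R.
rewrite IH S_INR; ring.
Qed.

Lemma wt_val e d (a x : bv d) :
  wt e a x = (e ^ (hb a x) * (1 - e) ^ (d - hb a x))%R.
Proof.
rewrite /wt (bigID (fun i => a i != x i)) /=.
have -> : \big[Rmult/1%R]_(i | true && (a i != x i)) (if a i == x i then (1 - e)%R else e)
  = \big[Rmult/1%R]_(i in [set i | a i != x i]) e.
  by apply: eq_big => i; rewrite ?inE //; move=> /negPf ->.
have -> : \big[Rmult/1%R]_(i | true && ~~ (a i != x i)) (if a i == x i then (1 - e)%R else e)
  = \big[Rmult/1%R]_(i in ~: [set i | a i != x i]) (1 - e)%R.
  by apply: eq_big => i; rewrite ?inE //; move=> /negPn ->.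
rewrite !big_const !iter_mul.
have hC : #|~: [set i | a i != x i]| = (d - hb a x)%N.
  by rewrite -[X in (X - _)%N](card_ord d) -(cardsC [set i | a i != x i]) /hb addKn.
by rewrite hC.
Qed.

Lemma exp_le_mono x y : (x <= y)%R -> (exp x <= exp y)%R.
Proof.
move=> H; case: (Rle_lt_or_eq_dec _ _ H) => [/exp_increasing|->]; lra.
Qed.

Lemma ln2_pos : (0 < ln 2)%R.
Proof. rewrite -ln_1; apply: ln_increasing; lra. Qed.

Lemma INR_subn n m : (m <= n)%N -> INR (n - m) = (INR n - INR m)%R.
Proof.
move=> hle; have := f_equal INR (subnK hle).
rewrite plus_INR => <-; ring.
Qed.

Lemma wt_lb e d (a x : bv d) : (0 < e)%R -> (e <= 1/2)%R ->
  (INR (hb a x) <= e * INR d)%R -> (Rpower 2 (- Hbin e * INR d) <= wt e a x)%R.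
Proof.
move=> e0 e2 hh; rewrite wt_val.
have he := hb_le a x; set h := hb a x in hh he *.
rewrite -!Rpower_pow; try lra.
rewrite /Rpower -exp_plus; apply: exp_le_mono.
rewrite INR_subn // /Hbin /log2.
have l2 := ln2_pos.
have hl : (ln e <= ln (1 - e))%R.
  case: (Rle_lt_or_eq_dec e (1 - e)); try lra.
    by move=> /(ln_increasing _ _ e0); lra.
  by move=> <-; lra.
have -> : ((- (- e * (ln e / ln 2) - (1 - e) * (ln (1 - e) / ln 2)) * INR d) * ln 2
   = INR d * (e * ln e + (1 - e) * ln (1 - e)))%R by field; lra.
nra.
Qed.

Definition ball e d (a : bv d) : {set bv d} := [set x | Rltb (INR (hb a x)) (e * INR d)%R].

Lemma wt_ge0 e d (a x : bv d) : (0 < e)%R -> (e <= 1/2)%R -> (0 <= wt e a x)%R.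
Proof. move=> e0 e2; rewrite wt_val; apply: Rmult_le_pos; apply: pow_le; lra. Qed.

Lemma ball_card e d (a : bv d) : (0 < e)%R -> (e <= 1/2)%R ->
  (INR #|ball e a| <= Rpower 2 (Hbin e * INR d))%R.
Proof.
move=> e0 e2.
have key : (INR #|ball e a| * Rpower 2 (- Hbin e * INR d) <= 1)%R.
  rewrite -iter_add -big_const -(sum_wt e a).
  apply: Rle_trans (_ : \big[Rplus/0%R]_(x in ball e a) wt e a x <= _)%R.
    apply: (big_ind2 (fun u v => u <= v)%R); first lra.
      by move=> *; lra.
    move=> x; rewrite inE => /RltbP hx; apply: wt_lb => //; exact: Rlt_le.
  rewrite [X in (_ <= X)%R](bigID (fun x => x \in ball e a)) /=.
  have : (0 <= \big[Rplus/0%R]_(i | ~~ (i \in ball e a)) wt e a i)%R.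
    apply: (big_ind (fun u => 0 <= u)%R); first lra.
      by move=> *; lra.
    by move=> x _; apply: wt_ge0.
  move=> H; apply: Rle_trans (Rplus_le_compat_l _ _ _ H); rewrite Rplus_0_r; exact: Rle_refl.
have hP : (0 < Rpower 2 (Hbin e * INR d))%R by rewrite /Rpower; apply: exp_pos.
move: key; rewrite -Ropp_mult_distr_l Rpower_Ropp => key.
have := Rmult_le_compat_r _ _ _ (Rlt_le _ _ hP) key.
rewrite Rmult_assoc Rinv_l; last by lra.
by rewrite Rmult_1_r Rmult_1_l.
Qed.

Lemma card_bigcup_le (T I : finType) (C : {set I}) (B : I -> {set T}) :
  (#|\bigcup_(c in C) B c| <= \sum_(c in C) #|B c|)%N.
Proof.
elim/big_rec2: _ => [|c s u _ IH]; first by rewrite cards0.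
apply: leq_trans (leq_card_setU _ _).1 _; exact: leq_add.
Qed.

Lemma INR_sum (I : finType) (P : pred I) (F : I -> nat) :
  INR (\sum_(i | P i) F i) = \big[Rplus/0%R]_(i | P i) INR (F i).
Proof.
apply: (big_morph INR (id1 := 0%R) (op1 := Rplus)) => //.
by move=> x y; exact: plus_INR.
Qed.

Lemma INR_exp2 d : INR (expn 2 d) = (2 ^ d)%R.
Proof. elim: d => [|d IH] //; rewrite expnS mult_INR IH /=; ring. Qed.

Lemma card_bv d : #|bv d| = (expn 2 d).
Proof. by rewrite card_ffun card_bool card_ord. Qed.

Lemma greedy e d : (0 < e)%R -> (e <= 1/2)%R -> (1 <= d)%N ->
  forall n, (INR n * Rpower 2 (Hbin e * INR d) <= INR (expn 2 d))%R ->
  exists C : {set bv d}, #|C| = n /\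
    forall a b, a \in C -> b \in C -> a <> b -> (e * INR d <= INR (hb a b))%R.
Proof.
move=> e0 e2 d1.
set r := Rpower 2 (Hbin e * INR d).
have hr : (0 < r)%R by rewrite /r /Rpower; apply: exp_pos.
elim=> [|n IH] hn.
  by exists set0; split; [rewrite cards0 | move=> a b; rewrite inE].
have [|C [hC hCp]] := IH.
  apply: (Rle_trans _ _ _ _ hn); rewrite S_INR; nra.
set bad := \bigcup_(c in C) ball e c.
have hbad : (INR #|bad| <= INR n * r)%R.
  have := card_bigcup_le C (fun c => ball e c); move/leP/le_INR => H1; apply: Rle_trans H1 _.
  rewrite INR_sum -hC -iter_add -big_const.
  apply: (big_ind2 (fun u v => u <= v)%R); first lra.
    by move=> *; lra.
  by move=> c _; apply: ball_card.
have hlt : (#|bad| < #|bv d|)%N.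
  rewrite card_bv; apply/ltP; apply: INR_lt.
  apply: Rle_lt_trans hbad _; apply: Rlt_le_trans _ _ _ _ hn; rewrite S_INR; nra.
have : (0 < #|~: bad|)%N.
  by move: hlt; rewrite -(cardsC bad); rewrite -{1}(addn0 #|bad|) ltn_add2l.
case/card_gt0P=> x; rewrite inE => hx.
have hd : (0 < e * INR d)%R.
  apply: Rmult_lt_0_compat => //; apply: lt_0_INR; apply/leP; exact: d1.
have xC : x \notin C.
  apply/negP=> xC; move/negP: hx; apply; apply/bigcupP; exists x => //.
  by rewrite inE hb_refl; apply/RltbP.
have far : forall c, c \in C -> (e * INR d <= INR (hb x c))%R.
  move=> c cC; rewrite hb_sym; apply: Rnot_lt_le => H.
  move/negP: hx; apply; apply/bigcupP; exists c => //.
  by rewrite inE; apply/RltbP.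
exists (x |: C); split.
  by rewrite cardsU1 xC hC.
move=> a b; rewrite !in_setU1 => /orP[/eqP->|aC] /orP[/eqP->|bC] ab //.
- exact: far.
- by rewrite hb_sym; apply: far.
- exact: hCp.
Qed.

Definition emb d (f : bv d) : cube d := [ffun i => if f i then ord0 else ord_max].

Lemma emb_ne d (f g : bv d) i : (emb f i != emb g i) = (f i != g i).
Proof. by rewrite !ffunE; case: (f i); case: (g i). Qed.

Lemma hamming_emb d (f g : bv d) : hamming (emb f) (emb g) = hb f g.
Proof. by apply: eq_card => i; rewrite !inE emb_ne. Qed.

Lemma emb_inj d : injective (@emb d).
Proof.
move=> f g H; apply/ffunP => i; apply/eqP; apply/negPn; apply/negP => ne.
by move: ne; rewrite -emb_ne H eqxx.
Qed.

Lemma hb_full d (f g : bv d) : (hb f g == d) = [forall i, f i != g i].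
Proof.
apply/eqP/forallP => [H i|H].
  have : [set i | f i != g i] = setT.
    apply/eqP; rewrite eqEcard subsetT cardsT card_ord /=; move: H; rewrite /hb => ->; exact: leqnn.
  by move/setP/(_ i); rewrite !inE.
rewrite /hb -[RHS](card_ord d) -cardsT; apply: eq_card => i; rewrite !inE; exact: H.
Qed.

Theorem proposition6 (eps : R) (d : nat) :
  (0 < eps)%R -> (eps <= 1/2)%R -> (1 <= d)%N ->
  forall N : nat, (0 < N)%N ->
    (INR N <= Rpower 2 ((1 - Hbin eps) * INR d))%R ->
    exists S : {set cube d}, eps_sparse eps S /\ #|S| = N.
Proof.
move=> e0 e2 d1 N _ hN.
have [|C [hC hCp]] := greedy e0 e2 d1 (n := N).
  have hr : (0 < Rpower 2 (Hbin eps * INR d))%R by rewrite /Rpower; apply: exp_pos.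
  apply: Rle_trans (Rmult_le_compat_r _ _ _ (Rlt_le _ _ hr) hN) _.
  rewrite -Rpower_plus INR_exp2 -Rpower_pow; last lra.
  right; congr Rpower; ring.
exists ((@emb d) @: C); split; last by rewrite card_imset //; exact: emb_inj.
split.
  move=> a b /imsetP[f fC ->] /imsetP[g gC ->] ne.
  rewrite hamming_emb; apply: hCp => // fg; apply: ne; by rewrite fg.
move=> a /imsetP[f fC ->].
exists (emb [ffun i => ~~ f i]).
apply/setP=> b; rewrite !inE.
apply/andP/eqP => [[hb1 /imsetP[g gC bg]]|->].
  move: hb1; rewrite bg hamming_emb hb_full => /forallP H.
  congr emb; apply/ffunP => i; move: (H i); rewrite ffunE.
  by case: (f i); case: (g i).
split; last by apply: imset_f.
rewrite hamming_emb hb_full; apply/forallP => i; rewrite ffunE.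
by case: (f i).
Qed.
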